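(* Let $G=(V,E)$ be an $S$-regular graph with cells $V_1,\dots,V_k$, $n_i=|V_i|$, cell function $\tau$, and let $B\subseteq V$. Write $B_i=B\cap V_i$, $b_i=|B_i|/n_i$, and $N_{B_i}(v)$ for the set of neighbours of $v$ in $B_i$. Then \[\sum_{v\in V}\sum_{i=1}^k\Bigl(|N_{B_i}(v)|-b_is_{\tau(v)i}\Bigr)^2\le\lambda_B^2\sum_{i=1}^k b_i(1-b_i)n_i.\]
   Context: All graphs are simple, undirected and connected. $G$ is $S$-regular ($S=(s_{ij})$ a $k\times k$ nonnegative integer matrix) if $V$ is partitioned into nonempty cells $V_1,\dots,V_k$ such that every vertex of $V_i$ has exactly $s_{ij}$ neighbours in $V_j$; $\tau(v)=i$ for $v\in V_i$. Let $A$ be the adjacency matrix, $|V|=n>k$. The subspace $W=\mathrm{span}\{\mathbf{1}_{V_1},\dots,\mathbf{1}_{V_k}\}$ is $A$-invariant, with eigenvalues on $W$ equal to those of $S$; the eigenvalues of $A$ on $W^\perp$ are the bulk eigenvalues, and $\lambda_B$ is the largest absolute value of a bulk eigenvalue. *)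

(* Defs.v *)
From HB Require Import structures.
From mathcomp Require Import all_boot all_order all_algebra.
From mathcomp Require Import reals.
Set Implicit Arguments. Unset Strict Implicit. Unset Printing Implicit Defensive.
Import Order.TTheory GRing.Theory Num.Theory.
Local Open Scope ring_scope.

Definition simple_connected_graph (n : nat) (adj : rel 'I_n) : Prop :=
  symmetric adj /\ irreflexive adj /\ (forall u v, connect adj u v).

(* G is S-regular w.r.t. the cell function tau : V -> 'I_k
   (cell V_i = tau^-1(i)); all cells nonempty and each vertex of V_i has
   exactly s_ij neighbours in V_j. *)
Definition S_regular (n k : nat) (adj : rel 'I_n) (tau : 'I_n -> 'I_k)
  (S : 'M[nat]_k) : Prop :=
  (forall i : 'I_k, exists v, tau v = i) /\
  (forall (v : 'I_n) (j : 'I_k),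
      #|[set u | adj v u && (tau u == j)]| = S (tau v) j).

Definition adjmx (R : realType) (n : nat) (adj : rel 'I_n) : 'M[R]_n :=
  \matrix_(i, j) (adj i j)%:R.

Definition cell_ind (R : realType) (n k : nat) (tau : 'I_n -> 'I_k) (i : 'I_k)
  : 'cV[R]_n := \col_v (tau v == i)%:R.

Definition in_Wperp (R : realType) (n k : nat) (tau : 'I_n -> 'I_k)
  (x : 'cV[R]_n) : Prop :=
  forall i : 'I_k, (cell_ind R tau i)^T *m x = 0.

Definition bulk_eigenvalue (R : realType) (n k : nat) (adj : rel 'I_n)
  (tau : 'I_n -> 'I_k) (l : R) : Prop :=
  exists x : 'cV[R]_n, [/\ x != 0, in_Wperp tau x & adjmx R adj *m x = l *: x].

Definition is_lambdaB (R : realType) (n k : nat) (adj : rel 'I_n)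
  (tau : 'I_n -> 'I_k) (lB : R) : Prop :=
  (exists l, bulk_eigenvalue adj tau l /\ `|l| = lB) /\
  (forall l, bulk_eigenvalue adj tau l -> `|l| <= lB).

(* Main.v *)
Require Import Defs.
From HB Require Import structures.
From mathcomp Require Import all_boot all_order all_algebra.
From mathcomp Require Import reals.
From mathcomp Require Import complex.
From mathcomp.algebra_tactics Require Import ring lra.
Import Order.TTheory GRing.Theory Num.Theory.
Local Open Scope ring_scope.

Section Gen.
Set Implicit Arguments. Unset Strict Implicit.
Variables (R : rcfType) (n : nat) (A : 'M[R]_n.+1).
Hypothesis symA : A^T = A.

Definition dot (x y : 'cV[R]_n.+1) : R := (x^T *m y) 0 0.

Lemma dotC x y : dot x y = dot y x.
Proof. by rewrite /dot -[y^T *m x]trmxK trmx_mul trmxK [RHS]mxE. Qed.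

Lemma dotDl x y z : dot (x + y) z = dot x z + dot y z.
Proof. by rewrite /dot linearD /= mulmxDl mxE. Qed.

Lemma dotZl c x z : dot (c *: x) z = c * dot x z.
Proof. by rewrite /dot linearZ /= -scalemxAl mxE. Qed.

Lemma dotDr x y z : dot z (x + y) = dot z x + dot z y.
Proof. by rewrite dotC dotDl !(dotC z). Qed.

Lemma dotZr c x z : dot z (c *: x) = c * dot z x.
Proof. by rewrite dotC dotZl dotC. Qed.

Lemma dot0r x : dot x 0 = 0.
Proof. by rewrite /dot mulmx0 mxE. Qed.

Lemma dotE x y : dot x y = \sum_i x i 0 * y i 0.
Proof. by rewrite /dot mxE; apply: eq_bigr => i _; rewrite mxE. Qed.

Lemma dot_ge0 x : 0 <= dot x x.
Proof. by rewrite dotE sumr_ge0 // => i _; rewrite -expr2 sqr_ge0. Qed.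

Lemma dot_eq0 x : (dot x x == 0) = (x == 0).
Proof.
apply/idP/idP; last by move/eqP->; rewrite dot0r.
rewrite dotE psumr_eq0; last by move=> i _; rewrite -expr2 sqr_ge0.
move/allP => H; apply/eqP/matrixP => i j; rewrite (ord1 j) mxE.
by have := H i (mem_index_enum _); rewrite -expr2 sqrf_eq0 => /eqP.
Qed.

Lemma dotM M x y : dot (M *m x) y = dot x (M^T *m y).
Proof. by rewrite /dot trmx_mul mulmxA. Qed.

Lemma dotA x y : dot (A *m x) y = dot x (A *m y).
Proof. by rewrite dotM symA. Qed.

Notation pA := (horner_mx A).

Lemma pA_tr p : (pA p)^T = pA p.
Proof.
elim/poly_ind: p => [|p c IH]; first by rewrite rmorph0 trmx0.
rewrite rmorphD rmorphM /= horner_mx_X horner_mx_C linearD /= tr_scalar_mx.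
rewrite -!mulmxE trmx_mul IH symA; congr (_ + _).
have := @comm_horner_mx2 R n A p 'X; rewrite horner_mx_X /GRing.comm.
by rewrite -!mulmxE.
Qed.

Lemma dotP p (x y : 'cV[R]_n.+1) : dot (pA p *m x) y = dot x (pA p *m y).
Proof. by rewrite dotM pA_tr. Qed.

Lemma pA_eig p (y : 'cV[R]_n.+1) a : A *m y = a *: y -> pA p *m y = p.[a] *: y.
Proof.
move=> Ay; elim/poly_ind: p => [|p c IH].
  by rewrite rmorph0 mul0mx horner0 scale0r.
rewrite rmorphD rmorphM /= horner_mx_X horner_mx_C -mulmxE mulmxDl -mulmxA Ay.
by rewrite -scalemxAr IH mul_scalar_mx hornerMXaddC scalerA scalerDl mulrC.
Qed.


Lemma dot_expand (u v : 'cV[R]_n.+1) c :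
  dot (u + c *: v) (u + c *: v) = dot u u + 2 * c * dot u v + c ^+ 2 * dot v v.
Proof. rewrite dotDl !dotDr !dotZl !dotZr (dotC v u); ring. Qed.

Variables (U : 'cV[R]_n.+1 -> Prop)
  (UD : forall x y, U x -> U y -> U (x + y))
  (UZ : forall c x, U x -> U (c *: x))
  (UA : forall x, U x -> U (A *m x))
  (lam : R)
  (bulk : forall y a, U y -> y != 0 -> A *m y = a *: y -> `|a| <= lam).

Lemma UP p : forall x, U x -> U (pA p *m x).
Proof.
elim/poly_ind: p => [|p c IH] x Ux.
  by rewrite rmorph0 mul0mx -(scale0r x); apply: UZ.
rewrite rmorphD rmorphM /= horner_mx_X horner_mx_C -mulmxE mulmxDl -mulmxA.
by rewrite mul_scalar_mx; apply: UD; [apply: IH; apply: UA | apply: UZ].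
Qed.

Lemma key m : forall (p : {poly R}) (x : 'cV[R]_n.+1), (size p <= m)%N -> p != 0 -> U x -> pA p *m x = 0 ->
  dot (A *m x) (A *m x) <= lam ^+ 2 * dot x x.
Proof.
elim: m => [|m IHm] p x.
  by rewrite leqn0 size_poly_eq0 => /eqP-> /eqP.
move=> sp p0 Ux px0.
case: (leqP (size p) 1) => [sp1|sp1].
  have /size_poly1P [c c0 Dp] : size p == 1%N.
    by rewrite eqn_leq sp1 lt0n size_poly_eq0.
  move: px0; rewrite Dp horner_mx_C mul_scalar_mx => /eqP.
  rewrite scaler_eq0 (negbTE c0) /= => /eqP->.
  by rewrite mulmx0 !dot0r mulr0.
have : size (map_poly (real_complex R) p) != 1%N by rewrite size_map_poly gtn_eqF.
case/closed_rootP => -[a b] rz.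
have Dz : (a +i* b)%C = (a%:C + 'i * b%:C)%C by rewrite [LHS]complexE.
case: (eqVneq b 0) => [b0|b0].
  have pa : root p a.
    move: rz; rewrite Dz b0 mulr0 addr0 /root horner_map fmorph_eq0 //.
  have [q Dp] := factor_theorem _ _ pa.
  have q0 : q != 0 by move: p0; rewrite Dp; apply: contra => /eqP->; rewrite mul0r.
  have szq : (size q <= m)%N.
    by move: sp; rewrite Dp size_mul ?polyXsubC_eq0 // size_XsubC addn2.
  set s := 'X - a%:P.
  have pAs : pA s = A - a%:M by rewrite rmorphB /= horner_mx_X horner_mx_C.
  set y := pA q *m x.
  have Ay : A *m y = a *: y.
    apply/eqP; rewrite -subr_eq0 -mul_scalar_mx -mulmxBl -pAs /y mulmxA mulmxE.
    by rewrite -rmorphM /= mulrC -Dp px0.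
  have Uy : U y := UP q Ux.
  case: (eqVneq y 0) => [y0|y0]; first exact: (IHm q x).
  have la : `|a| <= lam := bulk Uy y0 Ay.
  have qa : q.[a] != 0.
    apply/negP => qa0; have [r Dq] := factor_theorem _ _ qa0.
    have : dot y y = 0.
      rewrite {1}/y Dq mulrC rmorphM /= -mulmxE -mulmxA dotP (pA_eig _ Ay).
      by rewrite hornerXsubC subrr scale0r dot0r.
    by move/eqP; rewrite dot_eq0 (negbTE y0).
  set c := q.[a]^-1.
  set x2 := x - c *: y.
  have Ux2 : U x2 by rewrite /x2 -scaleNr; apply: UD => //; apply: UZ.
  have qx2 : pA q *m x2 = 0.
    rewrite /x2 mulmxBr -scalemxAr (pA_eig _ Ay) scalerA mulVf // scale1r.
    by rewrite subrr.
  have IH2 := IHm q x2 szq q0 Ux2 qx2.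
  have o1 : dot x2 y = 0.
    apply/eqP; rewrite -(mulrI_eq0 _ (lregP qa)) -dotZr -(pA_eig _ Ay) -dotP qx2.
    by rewrite dotC dot0r.
  have o2 : dot (A *m x2) y = 0 by rewrite dotA Ay dotZr o1 mulr0.
  have Dx : x = x2 + c *: y by rewrite /x2 subrK.
  rewrite Dx mulmxDr -scalemxAr Ay scalerA !dot_expand o1 o2.
  have na : `|a| ^+ 2 = a ^+ 2 := real_normK (num_real a).
  have ny := dot_ge0 y.
  have nn := normr_ge0 a.
  have h1 : a ^+ 2 <= lam ^+ 2 by rewrite -na; nra.
  have h2 : (c * a) ^+ 2 * dot y y <= lam ^+ 2 * (c ^+ 2 * dot y y).
    have h3 : 0 <= c ^+ 2 * dot y y by apply: mulr_ge0 => //; apply: sqr_ge0.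
    have := ler_wpM2r h3 h1; rewrite exprMn; lra.
  lra.
set q2 : {poly R} := ('X - a%:P) ^+ 2 + (b ^+ 2)%:P.
set z : R[i] := (a +i* b)%C.
have Dzc : conjc z = (a%:C - 'i * b%:C)%C.
  rewrite /z /=; apply/eqP; rewrite eq_complex /=.
  by apply/andP; split; apply/eqP; ring.
have mapq2 : map_poly (real_complex R) q2 = ('X - z%:P) * ('X - (conjc z)%:P).
  rewrite Dzc /z Dz /q2 rmorphD rmorphXn rmorphB /= map_polyX !map_polyC /=.
  have -> : (b ^+ 2)%:C%C = - ('i%C * b%:C%C) ^+ 2.
    by rewrite exprMn sqr_i mulN1r opprK rmorphXn.
  rewrite !polyCD !polyCN rmorphXn /=.
  ring.
have zz : conjc z != z.
  apply/negP => /eqP; rewrite /z => -[] hb.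
  by move/eqP: b0; apply; lra.
have dq2 : q2 %| p.
  suff H : map_poly (real_complex R) q2 %| map_poly (real_complex R) p.
    by rewrite -(dvdp_map (real_complex R)); exact: H.
  rewrite mapq2.
  have [g Dg] := factor_theorem _ _ rz.
  have rc : root (map_poly (real_complex R) p) (conjc z).
    have E : map_poly conjc (map_poly (real_complex R) p) = map_poly (real_complex R) p.
      by rewrite -map_poly_comp; apply: eq_map_poly => t; exact: conjc_real.
    by rewrite -E complex_root_conj conjcK.
  move: rc; rewrite Dg rootM root_XsubC (negbTE zz) orbF => /factor_theorem [h Dh].
  by rewrite Dh -mulrA (mulrC ('X - (conjc z)%:P)) dvdp_mull.
set r := p %/ q2.
have Dp : p = r * q2 by rewrite divpK.
have szq2 : size q2 = 3%N.
  rewrite /q2 size_polyDl size_exp_XsubC //.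
  by apply: leq_ltn_trans (size_polyC_leq1 _) _.
have q20 : q2 != 0 by rewrite -size_poly_eq0 szq2.
have r0 : r != 0 by move: p0; rewrite Dp; apply: contra => /eqP->; rewrite mul0r.
have szr : (size r <= m)%N.
  by move: sp; rewrite Dp size_mul // szq2 addn3 /= ltnS => /ltnW.
set y := pA r *m x.
case: (eqVneq y 0) => [y0|y0]; first exact: (IHm r x).
exfalso.
set s := 'X - a%:P.
have e0 : pA q2 *m y = 0 by rewrite /y mulmxA mulmxE -rmorphM /= mulrC -Dp.
have e1 : pA q2 *m y = pA s *m (pA s *m y) + b ^+ 2 *: y.
  by rewrite /q2 rmorphD rmorphXn /= horner_mx_C expr2 -mulmxE mulmxDl mul_scalar_mx mulmxA.
have : dot y (pA q2 *m y) = dot (pA s *m y) (pA s *m y) + b ^+ 2 * dot y y.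
  by rewrite e1 dotDr dotZr -dotP.
rewrite e0 dot0r => h.
have hb : 0 < b ^+ 2 by rewrite lt_def sqr_ge0 sqrf_eq0 b0.
have h1 := dot_ge0 (pA s *m y).
have h2 := dot_ge0 y.
have : dot y y == 0.
  rewrite eq_le h2 andbT.
  have : b ^+ 2 * dot y y <= 0 by lra.
  by rewrite pmulr_rle0.
by rewrite dot_eq0 (negbTE y0).
Qed.

Lemma key_all x : U x -> dot (A *m x) (A *m x) <= lam ^+ 2 * dot x x.
Proof.
move=> Ux; apply: (@key (size (char_poly A)) (char_poly A)) => //.
  by rewrite monic_neq0 // char_poly_monic.
by rewrite Cayley_Hamilton mul0mx.
Qed.

End Gen.

Lemma sum_ind (R : comNzRingType) (T : finType) (P : pred T) :
  \sum_(u : T) ((P u)%:R : R) = (#|[set u | P u]|)%:R.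
Proof.
rewrite -sum1_card natr_sum /= [RHS]big_mkcond /=; apply: eq_bigr => u _.
by rewrite inE; case: (P u).
Qed.


Lemma ind_aux1 (R : comNzRingType) (p q : bool) (c : R) :
  (q%:R) * ((p && q)%:R - c * q%:R) = (p && q)%:R - c * q%:R.
Proof. by case: p; case: q => /=; ring. Qed.

Lemma ind_aux2 (R : comNzRingType) (p q : bool) (c : R) :
  ((p && q)%:R - c * q%:R) * ((p && q)%:R - c * q%:R) =
  (p && q)%:R * (1 - 2 * c) + c ^+ 2 * q%:R.
Proof. by case: p; case: q => /=; ring. Qed.

Theorem mainTheorem8 (R : realType) (n k : nat) (adj : rel 'I_n)
  (tau : 'I_n -> 'I_k) (S : 'M[nat]_k) (lB : R) (B : {set 'I_n}) :
  simple_connected_graph adj ->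
  S_regular adj tau S ->
  (k < n)%N ->
  is_lambdaB adj tau lB ->
  let ncell (i : 'I_k) : R := #|[set v | tau v == i]|%:R in
  let b (i : 'I_k) : R := #|[set v in B | tau v == i]|%:R / ncell i in
  \sum_(v : 'I_n) \sum_(i : 'I_k)
     (#|[set u in B | adj v u && (tau u == i)]|%:R - b i * (S (tau v) i)%:R) ^+ 2
  <= lB ^+ 2 * \sum_(i : 'I_k) b i * (1 - b i) * ncell i.
Proof.
case: n adj tau B => [|n] adj tau B; first by move=> _ _; rewrite ltn0.
move=> [symadj _] [surj reg] _ [_ hL].
pose nc i : R := #|[set v | tau v == i]|%:R.
pose bb i : R := #|[set v in B | tau v == i]|%:R / nc i.
suff H : \sum_(v : 'I_n.+1) \sum_(i : 'I_k)
     (#|[set u in B | adj v u && (tau u == i)]|%:R - bb i * (S (tau v) i)%:R) ^+ 2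
  <= lB ^+ 2 * \sum_(i : 'I_k) bb i * (1 - bb i) * nc i by exact: H.
set A := adjmx R adj.
have symA : A^T = A.
  by apply/matrixP => u v; rewrite !mxE symadj.
have nc0 : forall i, nc i != 0.
  move=> i; have [v tv] := surj i; rewrite /nc pnatr_eq0 -lt0n.
  by apply/card_gt0P; exists v; rewrite inE tv.
have hB : forall i, (#|[set v in B | tau v == i]|%:R : R) = bb i * nc i.
  by move=> i; rewrite /bb divfK.
have UD : forall x y : 'cV[R]_n.+1, in_Wperp tau x -> in_Wperp tau y -> in_Wperp tau (x + y).
  by move=> x y Ux Uy j; rewrite mulmxDr Ux Uy addr0.
have UZ : forall (c : R) (x : 'cV[R]_n.+1), in_Wperp tau x -> in_Wperp tau (c *: x).
  by move=> c x Ux j; rewrite -scalemxAr Ux scaler0.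
have UA : forall x, in_Wperp tau x -> in_Wperp tau (A *m x).
  move=> y Uy j.
  have E : (cell_ind R tau j)^T *m A = \sum_l (S l j)%:R *: (cell_ind R tau l)^T.
    apply/matrixP => i0 v; rewrite (ord1 i0) summxE !mxE.
    under eq_bigr => u _ do rewrite !mxE.
    under [RHS]eq_bigr => l _ do rewrite !mxE.
    rewrite [RHS](bigD1 (tau v)) //= eqxx mulr1 [X in _ = _ + X]big1 ?addr0; last first.
      by move=> l hl; rewrite eq_sym (negbTE hl) mulr0.
    rewrite -reg -sum_ind; apply: eq_bigr => u _.
    by rewrite -natrM mulnb symadj andbC.
  by rewrite mulmxA E mulmx_suml big1 // => l _; rewrite -scalemxAl Uy scaler0.
have bulk : forall y a, in_Wperp tau y -> y != 0 -> A *m y = a *: y -> `|a| <= lB.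
  by move=> y a Uy y0 Ay; apply: hL; exists y; split.
have K := key_all symA UD UZ UA bulk.
pose x i : 'cV[R]_n.+1 := \col_u (((u \in B) && (tau u == i))%:R - bb i * (tau u == i)%:R).
rewrite exchange_big /= mulr_sumr; apply: ler_sum => i _.
have Ux : in_Wperp tau (x i).
  move=> j; apply/matrixP => i0 j0; rewrite (ord1 i0) (ord1 j0) !mxE.
  under eq_bigr => u _ do rewrite !mxE.
  case: (eqVneq j i) => [->|ji].
    under eq_bigr => u _ do rewrite ind_aux1.
    rewrite sumrB -mulr_sumr !sum_ind -/(nc i) hB subrr.
    done.
  rewrite big1 // => u _; case: (eqVneq (tau u) j) => [tj|tj].
    by rewrite tj (negbTE ji) andbF mulr0 subrr mulr0.
  by rewrite mul0r.
have E1 : \sum_v (#|[set u in B | adj v u && (tau u == i)]|%:R - bb i * (S (tau v) i)%:R) ^+ 2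
    = dot (A *m x i) (A *m x i).
  rewrite dotE; apply: eq_bigr => v _; rewrite expr2; congr (_ * _);
  rewrite !mxE; under eq_bigr => u _ do rewrite !mxE mulrBr mulrCA -!natrM !mulnb andbCA;
  by rewrite sumrB -mulr_sumr !sum_ind reg.
have E2 : dot (x i) (x i) = bb i * (1 - bb i) * nc i.
  rewrite dotE.
  under eq_bigr => v _ do rewrite !mxE ind_aux2.
  by rewrite big_split /= -mulr_suml -mulr_sumr !sum_ind -/(nc i) hB; ring.
rewrite E1 -E2; exact: K.
Qed.
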